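(* Let $\Sigma$ be a finite acyclic set of dependencies and let $\mathcal{D}$ and $\mathcal{D}'$ be databases with $\mathcal{D}'\subseteq\mathcal{D}$. Then $\mathcal{D}'$ is a repair of $\langle\Sigma,\mathcal{D}\rangle$ if and only if $\mathcal{D}'$ is consistent with $\Sigma$ and, for every $\alpha\in\mathcal{D}\setminus\mathcal{D}'$, the database $\mathcal{D}'\cup\{\alpha\}$ is inconsistent with $\Sigma$.
   Context: A signature is a set of predicate symbols with arities, always containing a special 0-ary predicate $\bot$. A term is a constant or a variable; a (predicate) atom is $p(t_1,\dots,t_n)$; an inequality is $t\neq t'$. A database is a finite set of ground atoms (facts) not containing $\bot$. A conjunction with inequalities is a conjunction of at least one predicate atom or inequality. A CQ is $\exists\vec y\,\gamma$ with $\gamma$ a conjunction with inequalities; a UCQ is a finite disjunction of CQs. A dependency is a first-order sentence $\forall\vec x\,(\gamma\rightarrow Q)$ where $\gamma$ (the body) is a conjunction with inequalities whose variables are in $\vec x$, each occurring in some predicate atom of $\gamma$, and $Q$ (the head) is a UCQ whose free variables are among $\vec x$ and in which every existentially quantified variable of each disjunct occurs in a predicate atom of that disjunct. $\mathcal{D}$ is consistent with $\Sigma$ if $\mathcal{D}$ satisfies every dependency of $\Sigma$. A repair of $\langle\Sigma,\mathcal{D}\rangle$ is an inclusion-maximal subset of $\mathcal{D}$ consistent with $\Sigma$. The dependency graph of $\Sigma$ has the dependencies of $\Sigma$ as vertices and an edge from $\tau_1$ to $\tau_2$ iff the head of $\tau_1$ contains an atom whose predicate appears in a predicate atom of the body of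 $\tau_2$; $\Sigma$ is acyclic if this graph has no cycle. *)

(* Defs.v *)
From Stdlib Require Import List Relations.
Import ListNotations.
Set Implicit Arguments.

Section Deps.
(* P : predicate symbols, ar : arity, bot : the special 0-ary predicate ⊥,
   C : constants.  Variables are natural numbers. *)
Context {P C : Type} (ar : P -> nat) (bot : P).

Inductive term : Type := TConst (c : C) | TVar (x : nat).

Record atom : Type := mkAtom { apred : P ; aargs : list term }.

Inductive literal : Type :=
  | LAtom (a : atom)
  | LNeq (t t' : term).

Definition conj := list literal.

(* CQ: exists cq_ex, cq_body *)
Record cq : Type := mkCQ { cq_ex : list nat ; cq_body : conj }.
Definition ucq := list cq.

(* forall dep_vars, dep_body -> dep_head *)
Record dependency : Type :=
  mkDep { dep_vars : list nat ; dep_body : conj ; dep_head : ucq }.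

Definition fact : Type := (P * list C)%type.
(* a (possibly infinite) set of facts; databases are finite such sets *)
Definition fset := fact -> Prop.

Definition term_vars (t : term) : list nat :=
  match t with TConst _ => [] | TVar x => [x] end.
Definition atom_vars (a : atom) : list nat := flat_map term_vars (aargs a).
Definition lit_vars (l : literal) : list nat :=
  match l with LAtom a => atom_vars a | LNeq t t' => term_vars t ++ term_vars t' end.
Definition conj_vars (g : conj) : list nat := flat_map lit_vars g.
Definition conj_atom_vars (g : conj) : list nat :=
  flat_map (fun l => match l with LAtom a => atom_vars a | LNeq _ _ => [] end) g.
Definition conj_preds (g : conj) : list P :=
  flat_map (fun l => match l with LAtom a => [apred a] | LNeq _ _ => [] end) g.
Definition cq_free_vars (q : cq) : list nat :=
  filter (fun x => negb (existsb (Nat.eqb x) (cq_ex q))) (conj_vars (cq_body q)).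

Definition wf_atom (a : atom) : Prop := length (aargs a) = ar (apred a).
Definition wf_conj (g : conj) : Prop :=
  g <> [] /\ forall a, In (LAtom a) g -> wf_atom a.
Definition wf_cq (q : cq) : Prop :=
  wf_conj (cq_body q) /\
  forall y, In y (cq_ex q) -> In y (conj_atom_vars (cq_body q)).
Definition wf_dep (d : dependency) : Prop :=
  wf_conj (dep_body d) /\
  (forall x, In x (conj_vars (dep_body d)) -> In x (dep_vars d)) /\
  (forall x, In x (conj_vars (dep_body d)) -> In x (conj_atom_vars (dep_body d))) /\
  (forall q, In q (dep_head d) ->
     wf_cq q /\ forall x, In x (cq_free_vars q) -> In x (dep_vars d)).

Definition wf_fact (f : fact) : Prop := length (snd f) = ar (fst f).

Definition is_database (D : fset) : Prop :=
  (exists l : list fact, forall f, D f <-> In f l) /\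
  (forall f, D f -> wf_fact f /\ fst f <> bot).

(* --- semantics: quantifiers range over all constants (standard names) --- *)
Definition eval (nu : nat -> C) (t : term) : C :=
  match t with TConst c => c | TVar x => nu x end.
Definition sat_lit (D : fset) (nu : nat -> C) (l : literal) : Prop :=
  match l with
  | LAtom a => D (apred a, map (eval nu) (aargs a))
  | LNeq t t' => eval nu t <> eval nu t'
  end.
Definition sat_conj (D : fset) (nu : nat -> C) (g : conj) : Prop :=
  forall l, In l g -> sat_lit D nu l.
Definition sat_cq (D : fset) (nu : nat -> C) (q : cq) : Prop :=
  exists nu' : nat -> C,
    (forall x, ~ In x (cq_ex q) -> nu' x = nu x) /\ sat_conj D nu' (cq_body q).
Definition sat_ucq (D : fset) (nu : nat -> C) (Q : ucq) : Prop :=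
  exists q, In q Q /\ sat_cq D nu q.
Definition satisfies (D : fset) (d : dependency) : Prop :=
  forall nu : nat -> C, sat_conj D nu (dep_body d) -> sat_ucq D nu (dep_head d).

Definition consistent (Sigma : list dependency) (D : fset) : Prop :=
  forall d, In d Sigma -> satisfies D d.

Definition subset (A B : fset) : Prop := forall f, A f -> B f.
Definition set_eq (A B : fset) : Prop := forall f, A f <-> B f.

Definition is_repair (Sigma : list dependency) (D D' : fset) : Prop :=
  subset D' D /\ consistent Sigma D' /\
  forall D'', subset D' D'' -> subset D'' D -> consistent Sigma D'' -> set_eq D'' D'.

Definition dep_edge (d1 d2 : dependency) : Prop :=
  exists p, (exists q, In q (dep_head d1) /\ In p (conj_preds (cq_body q)))
            /\ In p (conj_preds (dep_body d2)).
Definition graph_edge (Sigma : list dependency) (d1 d2 : dependency) : Prop :=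
  In d1 Sigma /\ In d2 Sigma /\ dep_edge d1 d2.
Definition acyclic (Sigma : list dependency) : Prop :=
  forall d, ~ clos_trans dependency (graph_edge Sigma) d d.

End Deps.

(* Main.v *)
Require Import Defs.
From Stdlib Require Import List Relations Classical.
Import ListNotations.

Section Aux.
Context {P C : Type}.

Lemma mono_lit (A B : @fset P C) nu l : subset A B -> sat_lit A nu l -> sat_lit B nu l.
Proof. intros H; destruct l; simpl; auto. Qed.

Lemma mono_conj (A B : @fset P C) nu g : subset A B -> sat_conj A nu g -> sat_conj B nu g.
Proof. intros H S l Hl. eapply mono_lit; eauto. Qed.

Lemma mono_ucq (A B : @fset P C) nu Q : subset A B -> sat_ucq A nu Q -> sat_ucq B nu Q.
Proof.
  intros H [q [Hq [nu' [H1 H2]]]]. exists q; split; auto. exists nu'; split; auto.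
  eapply mono_conj; eauto.
Qed.

Lemma not_all_in (A : Type) (Q : A -> Prop) (g : list A) :
  ~ (forall l, In l g -> Q l) -> exists l, In l g /\ ~ Q l.
Proof.
  intros H. apply NNPP; intro H'. apply H; intros l Hl.
  apply NNPP; intro Hn. apply H'; eauto.
Qed.

Lemma in_preds (a : @atom P C) g : In (LAtom a) g -> In (apred a) (conj_preds g).
Proof.
  intros H. unfold conj_preds. apply in_flat_map. exists (LAtom a); simpl; auto.
Qed.

Lemma key (Sigma : list (@dependency P C)) (D' D'' : fset) alpha :
  consistent Sigma D' -> consistent Sigma D'' -> subset D' D'' -> D'' alpha ->
  ~ consistent Sigma (fun f => D' f \/ f = alpha) ->
  exists t, In t Sigma /\ In (fst alpha) (conj_preds (dep_body t)) /\
    exists beta, D'' beta /\ ~ D' beta /\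
      exists q, In q (dep_head t) /\ In (fst beta) (conj_preds (cq_body q)).
Proof.
  intros C1 C2 Hs Ha Hn.
  set (E := fun f => D' f \/ f = alpha).
  assert (Hs1 : subset D' E) by (intros f Hf; left; auto).
  assert (Hs2 : subset E D'') by (intros f [Hf|Hf]; subst; auto).
  apply not_all_in in Hn. destruct Hn as [t [Ht Hnt]].
  unfold satisfies in Hnt.
  apply not_all_ex_not in Hnt. destruct Hnt as [nu Hnu].
  apply imply_to_and in Hnu. destruct Hnu as [Hb Hh].
  exists t; split; auto; split.
  - assert (~ sat_conj D' nu (dep_body t)).
    { intro HB. apply Hh. eapply mono_ucq; [exact Hs1|]. apply (C1 t Ht nu HB). }
    apply not_all_in in H. destruct H as [l [Hl Hnl]].
    pose proof (Hb l Hl) as Hsl.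
    destruct l as [a|t1 t2]; simpl in *; [|tauto].
    destruct Hsl as [Hsl|Hsl]; [tauto|]. subst alpha. simpl. now apply in_preds.
  - destruct (C2 t Ht nu (mono_conj _ _ _ _ Hs2 Hb)) as [q [Hq [nu' [H1 H2]]]].
    assert (~ sat_conj E nu' (cq_body q)).
    { intro HB. apply Hh. exists q; split; auto. exists nu'; auto. }
    apply not_all_in in H. destruct H as [l [Hl Hnl]].
    pose proof (H2 l Hl) as Hsl.
    destruct l as [a|t1 t2]; simpl in *; [|tauto].
    exists (apred a, map (eval nu') (aargs a)). split; auto. split.
    + intro. apply Hnl. left; auto.
    + exists q; split; auto. simpl. now apply in_preds.
Qed.

Lemma t_rt_t (A : Type) (E : A -> A -> Prop) x y z :
  clos_trans A E x y -> clos_refl_trans A E y z -> clos_trans A E x z.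
Proof.
  intros T R. revert x T. induction R; intros; eauto using t_trans, t_step.
Qed.

Lemma cycle_lemma (A : Type) (E : A -> A -> Prop) (L : list A) :
  forall G : A -> Prop, (forall x, G x -> In x L) ->
  (forall x, G x -> exists y, G y /\ E x y) -> (exists x, G x) ->
  exists z, clos_trans A E z z.
Proof.
  induction L as [|a L IH]; intros G HL Hs [x0 Hx0].
  - destruct (HL x0 Hx0).
  - destruct (classic (G a)) as [Ga|nGa].
    + destruct (classic (exists y, G y /\ ~ clos_refl_trans A E y a)) as [Ex|nEx].
      * apply (IH (fun y => G y /\ ~ clos_refl_trans A E y a)).
        -- intros y [Gy Hy]. destruct (HL y Gy) as [<-|?]; auto.
           exfalso; apply Hy; apply rt_refl.
        -- intros y [Gy Hy]. destruct (Hs y Gy) as [y' [Gy' Ey]].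
           exists y'; split; auto. split; auto. intro R. apply Hy.
           eapply rt_trans; [apply rt_step; eauto| exact R].
        -- exact Ex.
      * destruct (Hs a Ga) as [y [Gy Ey]].
        assert (R : clos_refl_trans A E y a).
        { apply NNPP; intro. apply nEx; eauto. }
        exists a. apply t_rt_t with y; auto. apply t_step; auto.
    + apply (IH G); eauto.
      intros y Gy. destruct (HL y Gy) as [<-|?]; tauto.
Qed.

End Aux.

Theorem proposition2 (P C : Type) (ar : P -> nat) (bot : P)
  (Hbot : ar bot = 0)
  (HC : exists f : nat -> C, forall n m, f n = f m -> n = m)
  (Sigma : list (@dependency P C)) (D D' : @fset P C)
  (Hwf : forall d, In d Sigma -> wf_dep ar d)
  (Hacyc : acyclic Sigma)
  (HD : is_database ar bot D) (HD' : is_database ar bot D')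
  (Hsub : subset D' D) :
  is_repair Sigma D D' <->
  (consistent Sigma D' /\
   forall alpha, D alpha -> ~ D' alpha ->
     ~ consistent Sigma (fun f => D' f \/ f = alpha)).
Proof.
  split.
  - intros [_ [Hc Hmax]]. split; auto.
    intros alpha Ha Hna Hc'.
    assert (Heq := Hmax (fun f => D' f \/ f = alpha)
      ltac:(intros f Hf; left; auto)
      ltac:(intros f [Hf|Hf]; subst; auto) Hc').
    apply Hna. apply Heq. right; auto.
  - intros [Hc Hmin]. split; auto. split; auto.
    intros D'' H1 H2 H3 f. split; [|apply H1].
    intro Hf. apply NNPP; intro Hnf.
    set (G := fun t : dependency => In t Sigma /\ exists beta, D'' beta /\ ~ D' beta /\
      exists q, In q (dep_head t) /\ In (fst beta) (conj_preds (cq_body q))).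
    destruct (@cycle_lemma _ (graph_edge Sigma) Sigma G) as [z Hz].
    + intros x [Hx _]; auto.
    + intros x [Hx [beta [Hb1 [Hb2 [q [Hq Hq2]]]]]].
      destruct (key Sigma D' D'' beta Hc H3 H1 Hb1 (Hmin beta (H2 _ Hb1) Hb2))
        as [t [Ht [Hbt Hrest]]].
      exists t; split. { split; auto. }
      split; auto. split; auto. exists (fst beta); split; eauto.
    + destruct (key Sigma D' D'' f Hc H3 H1 Hf (Hmin f (H2 _ Hf) Hnf))
        as [t [Ht [_ Hrest]]].
      exists t; split; auto.
    + exact (Hacyc z Hz).
Qed.
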